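(* Assume $\Delta=0$. Let $\mathcal{O}'(K)$ be the subring of $K$ generated (as a ring with $1$) by $\alpha,\beta,\gamma,\alpha l,\beta m$. Then $N$, viewed as an additive subgroup of $K^2$, is an $\mathcal{O}'(K)$-module: for every $\zeta\in N$ and every $x\in\mathcal{O}'(K)$ one has $x\zeta\in N$ (scalar multiplication in $K^2$). In particular $N$ is stable under multiplication by $\theta:=-4+\alpha+\beta+\gamma+\alpha l$.
   Context: Setting. Let $p,q,r\ge 3$ be integers and $W=W(p,q,r)$ the Coxeter group with generators $s_1,s_2,s_3$ and relations $s_i^2=1$, $(s_1s_2)^p=(s_1s_3)^q=(s_2s_3)^r=1$. Let $\alpha=4\cos^2(\pi k_1/p)$, $\beta=4\cos^2(\pi k_2/q)$, $\gamma=4\cos^2(\pi k_3/r)$ with $\gcd(k_1,p)=\gcd(k_2,q)=\gcd(k_3,r)=1$ (so $0<\alpha,\beta,\gamma<4$), and let $l,m\in\mathbb{C}$ with $lm=\gamma$. Let $K\subset\mathbb{C}$ be a field containing $\alpha,\beta,\gamma,l,m$, and $M$ a $3$-dimensional $K$-vector space with basis $(a_1,a_2,a_3)$. The reflection representation $R:W\to GL(M)$ with parameters $(\alpha,\beta,\gamma;l,m)$ is defined by: for $x=\lambda_1a_1+\lambda_2a_2+\lambda_3a_3$, $R(s_1)x=x-(2\lambda_1-\alpha\lambda_2-\beta\lambda_3)a_1$, $R(s_2)x=x-(-\lambda_1+2\lambda_2-l\lambda_3)a_2$, $R(s_3)x=x-(-\lambda_1-m\lambda_2+2\lambda_3)a_3$.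 Put $G=R(W)$ and write $s_i$ for $R(s_i)$. Let $\Delta=8-2\alpha-2\beta-2\gamma-(\alpha l+\beta m)$; $R$ is reducible iff $\Delta=0$. Reducible setting. Assume $\Delta=0$. Put $b=(4-\gamma)a_1+(l+2)a_2+(m+2)a_3$; then the space of $G$-fixed vectors is $C_M(G)=Kb$ and $(b,a_2,a_3)$ is a basis of $M$. Let $N=N(G)$ be the subgroup of elements of $G$ acting trivially on $M/C_M(G)$. Each $\zeta\in N$ satisfies $\zeta(b)=b$, $\zeta(a_2)=a_2+\lambda b$, $\zeta(a_3)=a_3+\mu b$ for a unique $(\lambda,\mu)\in K^2$; the map $\zeta\mapsto(\lambda,\mu)$ is an injective group homomorphism $N\to (K^2,+)$, through which $N$ is identified with an additive subgroup of $K^2$ (and written additively). Put $c_1=(\alpha,\beta)$, $c_2=(-2,l)$, $c_3=(m,-2)\in K^2$ and, for $\zeta=(\lambda,\mu)\in K^2$, $\omega(\zeta)=-\frac{\lambda(l+2)+\mu(m+2)}{4-\gamma}$. *)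

(* Defs.v *)
From HB Require Import structures.
From mathcomp Require Import all_boot all_order all_algebra all_field.
Set Implicit Arguments. Unset Strict Implicit. Unset Printing Implicit Defensive.
Import Order.TTheory GRing.Theory Num.Theory.
Local Open Scope ring_scope.

(* Indices of the basis (a_1,a_2,a_3) of M = K^3 (coordinates as columns). *)
Definition i1 : 'I_3 := @Ordinal 3 0 isT.
Definition i2 : 'I_3 := @Ordinal 3 1 isT.
Definition i3 : 'I_3 := @Ordinal 3 2 isT.

Definition avec (K : fieldType) (i : 'I_3) : 'cV[K]_3 := delta_mx i 0.

Definition row3 (K : fieldType) (x y z : K) : 'rV[K]_3 := \row_j [:: x; y; z]`_j.
Definition col3 (K : fieldType) (x y z : K) : 'cV[K]_3 := \col_i [:: x; y; z]`_i.

Definition reflmx (K : fieldType) (k : 'I_3) (c : 'rV[K]_3) : 'M[K]_3 :=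
  1%:M - avec K k *m c.

Definition Rs1 (K : fieldType) (alpha beta : K) : 'M[K]_3 :=
  reflmx i1 (row3 2 (- alpha) (- beta)).
Definition Rs2 (K : fieldType) (l : K) : 'M[K]_3 :=
  reflmx i2 (row3 (-1) 2 (- l)).
Definition Rs3 (K : fieldType) (m : K) : 'M[K]_3 :=
  reflmx i3 (row3 (-1) (- m) 2).

(* G = R(W): the group generated by R(s_1),R(s_2),R(s_3) in GL(M).
   Since each R(s_i) is an involution, it is the monoid they generate. *)
Inductive inG (K : fieldType) (alpha beta l m : K) : 'M[K]_3 -> Prop :=
  | inG1 : inG alpha beta l m 1%:M
  | inG_s1 g : inG alpha beta l m g -> inG alpha beta l m (g *m Rs1 alpha beta)
  | inG_s2 g : inG alpha beta l m g -> inG alpha beta l m (g *m Rs2 l)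
  | inG_s3 g : inG alpha beta l m g -> inG alpha beta l m (g *m Rs3 m).

Definition fixedG (K : fieldType) (alpha beta l m : K) (v : 'cV[K]_3) : Prop :=
  forall g, inG alpha beta l m g -> g *m v = v.

(* N(G): elements of G acting trivially on M / C_M(G) *)
Definition inN (K : fieldType) (alpha beta l m : K) (g : 'M[K]_3) : Prop :=
  inG alpha beta l m g /\
  forall v : 'cV[K]_3, fixedG alpha beta l m (g *m v - v).

Definition bvec (K : fieldType) (gamma l m : K) : 'cV[K]_3 :=
  col3 (4 - gamma) (l + 2) (m + 2).

Definition Ncoord (K : fieldType) (gamma l m : K) (g : 'M[K]_3) (lam mu : K) : Prop :=
  g *m avec K i2 = avec K i2 + lam *: bvec gamma l m /\
  g *m avec K i3 = avec K i3 + mu *: bvec gamma l m.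

Definition N2 (K : fieldType) (alpha beta gamma l m : K) (z : K * K) : Prop :=
  exists g, inN alpha beta l m g /\ Ncoord gamma l m g z.1 z.2.

Inductive inO' (K : fieldType) (alpha beta gamma l m : K) : K -> Prop :=
  | O'1 : inO' alpha beta gamma l m 1
  | O'alpha : inO' alpha beta gamma l m alpha
  | O'beta : inO' alpha beta gamma l m beta
  | O'gamma : inO' alpha beta gamma l m gamma
  | O'al : inO' alpha beta gamma l m (alpha * l)
  | O'bm : inO' alpha beta gamma l m (beta * m)
  | O'add x y : inO' alpha beta gamma l m x -> inO' alpha beta gamma l m y ->
                inO' alpha beta gamma l m (x + y)
  | O'opp x : inO' alpha beta gamma l m x -> inO' alpha beta gamma l m (- x)
  | O'mul x y : inO' alpha beta gamma l m x -> inO' alpha beta gamma l m y ->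
                inO' alpha beta gamma l m (x * y).

Definition Delta (K : fieldType) (alpha beta gamma l m : K) : K :=
  8 - 2 * alpha - 2 * beta - 2 * gamma - (alpha * l + beta * m).

(* Main.v *)
Require Import Defs.
From HB Require Import structures.
From mathcomp Require Import all_boot all_order all_algebra all_field.
From mathcomp Require Import ring.
Set Implicit Arguments. Unset Strict Implicit. Unset Printing Implicit Defensive.
Import Order.TTheory GRing.Theory Num.Theory.
Local Open Scope ring_scope.

Ltac mxbrute := rewrite /Rs1 /Rs2 /Rs3 /reflmx /avec /row3 /col3 /bvec /i1 /i2 /i3;
  apply/matrixP => [[[|[|[|?]]] ?] [[|[|[|?]]] ?]] //;
  repeat (rewrite !mxE /= ?big_ord_recl ?big_ord0 /=).

Lemma lin0 (K : fieldType) (x y c d : K) : x - y = c * d -> d = 0 -> x = y.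
Proof. by move=> h hd; apply/eqP; rewrite -subr_eq0 h hd mulr0. Qed.

Lemma sq1 (K : fieldType) (al be : K) : Rs1 al be *m Rs1 al be = 1%:M.
Proof. mxbrute; ring. Qed.
Lemma sq2 (K : fieldType) (l : K) : Rs2 l *m Rs2 l = 1%:M.
Proof. mxbrute; ring. Qed.
Lemma sq3 (K : fieldType) (m : K) : Rs3 m *m Rs3 m = 1%:M.
Proof. mxbrute; ring. Qed.

Lemma sb1 (K : fieldType) (al be l m : K) :
  Delta al be (l * m) l m = 0 -> Rs1 al be *m bvec (l * m) l m = bvec (l * m) l m.
Proof. move=> hD. mxbrute; try ring.
apply: (lin0 (c := -1) _ hD); rewrite /Delta; ring. Qed.
Lemma sb2 (K : fieldType) (l m : K) :
  Rs2 l *m bvec (l * m) l m = bvec (l * m) l m.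
Proof. mxbrute; ring. Qed.
Lemma sb3 (K : fieldType) (l m : K) :
  Rs3 m *m bvec (l * m) l m = bvec (l * m) l m.
Proof. mxbrute; ring. Qed.

Lemma r1 (K : fieldType) (al be x y z : K) :
  row3 x y z *m Rs1 al be = row3 (- x) (y + al * x) (z + be * x).
Proof. mxbrute; ring. Qed.
Lemma r2 (K : fieldType) (l x y z : K) :
  row3 x y z *m Rs2 l = row3 (x + y) (- y) (z + l * y).
Proof. mxbrute; ring. Qed.
Lemma r3 (K : fieldType) (m x y z : K) :
  row3 x y z *m Rs3 m = row3 (x + z) (y + m * z) (- z).
Proof. mxbrute; ring. Qed.

Lemma rowD (K : fieldType) (x y z x' y' z' : K) :
  row3 x y z + row3 x' y' z' = row3 (x + x') (y + y') (z + z').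
Proof. mxbrute; ring. Qed.

Lemma rowcol (K : fieldType) (x y z u v w : K) :
  row3 x y z *m col3 u v w = (x * u + y * v + z * w)%:M.
Proof. mxbrute; ring. Qed.

Definition Em (K : fieldType) (ga l m x y z : K) : 'M[K]_3 :=
  1%:M + bvec ga l m *m row3 x y z.

Definition Cn (K : fieldType) (ga l m x y z : K) : K :=
  x * (4 - ga) + y * (l + 2) + z * (m + 2).

Lemma rowb (K : fieldType) (ga l m x y z : K) :
  Cn ga l m x y z = 0 -> row3 x y z *m bvec ga l m = 0.
Proof. by rewrite /Cn /bvec rowcol => ->; apply/matrixP => i j; rewrite !mxE mul0rn. Qed.

Lemma Em_mul (K : fieldType) (ga l m x y z x' y' z' : K) :
  Cn ga l m x y z = 0 ->
  Em ga l m x y z *m Em ga l m x' y' z' = Em ga l m (x + x') (y + y') (z + z').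
Proof.
move=> h; rewrite /Em mulmxDr mulmx1 mulmxDl mul1mx -!mulmxA (mulmxA (row3 x y z)).
rewrite rowb // mul0mx mulmx0 addr0 -addrA -mulmxDr rowD //.
Qed.

Lemma Em_b (K : fieldType) (ga l m x y z : K) :
  Cn ga l m x y z = 0 -> Em ga l m x y z *m bvec ga l m = bvec ga l m.
Proof. by move=> h; rewrite /Em mulmxDl mul1mx -mulmxA rowb // mulmx0 addr0. Qed.

Lemma Em_a2 (K : fieldType) (ga l m x y z : K) :
  Em ga l m x y z *m avec K i2 = avec K i2 + y *: bvec ga l m.
Proof. rewrite /Em; mxbrute; ring. Qed.
Lemma Em_a3 (K : fieldType) (ga l m x y z : K) :
  Em ga l m x y z *m avec K i3 = avec K i3 + z *: bvec ga l m.
Proof. rewrite /Em; mxbrute; ring. Qed.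
Lemma Em_a1 (K : fieldType) (ga l m x y z : K) :
  Em ga l m x y z *m avec K i1 = avec K i1 + x *: bvec ga l m.
Proof. rewrite /Em; mxbrute; ring. Qed.

Lemma conj_gen (K : fieldType) (s : 'M[K]_3) (B : 'cV[K]_3) (R R' : 'rV[K]_3) :
  s *m s = 1%:M -> s *m B = B -> R *m s = R' ->
  s *m (1%:M + B *m R) *m s = 1%:M + B *m R'.
Proof.
move=> hs hb hr.
by rewrite mulmxDr mulmx1 mulmxDl hs !mulmxA hb -mulmxA hr.
Qed.

Lemma inG_mul (K : fieldType) (al be l m : K) g h :
  inG al be l m g -> inG al be l m h -> inG al be l m (h *m g).
Proof.
elim=> [|g' _ IH|g' _ IH|g' _ IH] hh; first by rewrite mulmx1.
- by rewrite mulmxA; apply: inG_s1; apply: IH.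
- by rewrite mulmxA; apply: inG_s2; apply: IH.
- by rewrite mulmxA; apply: inG_s3; apply: IH.
Qed.

Lemma inG_R1 (K : fieldType) (al be l m : K) : inG al be l m (Rs1 al be).
Proof. by have := inG_s1 (inG1 al be l m); rewrite mul1mx. Qed.
Lemma inG_R2 (K : fieldType) (al be l m : K) : inG al be l m (Rs2 l).
Proof. by have := inG_s2 (inG1 al be l m); rewrite mul1mx. Qed.
Lemma inG_R3 (K : fieldType) (al be l m : K) : inG al be l m (Rs3 m).
Proof. by have := inG_s3 (inG1 al be l m); rewrite mul1mx. Qed.

Lemma inG_inv (K : fieldType) (al be l m : K) g :
  inG al be l m g -> exists g', inG al be l m g' /\ g *m g' = 1%:M.
Proof.
elim=> [|g' _ [h [hh e]]|g' _ [h [hh e]]|g' _ [h [hh e]]].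
- by exists 1%:M; split; [apply: inG1 | rewrite mulmx1].
- exists (Rs1 al be *m h); split; first by apply: inG_mul => //; apply: inG_R1.
  by rewrite mulmxA -(mulmxA g') sq1 mulmx1.
- exists (Rs2 l *m h); split; first by apply: inG_mul => //; apply: inG_R2.
  by rewrite mulmxA -(mulmxA g') sq2 mulmx1.
- exists (Rs3 m *m h); split; first by apply: inG_mul => //; apply: inG_R3.
  by rewrite mulmxA -(mulmxA g') sq3 mulmx1.
Qed.

Lemma bfix (K : fieldType) (al be l m : K) g :
  Delta al be (l * m) l m = 0 ->
  inG al be l m g -> g *m bvec (l * m) l m = bvec (l * m) l m.
Proof.
move=> hD; elim=> [|g' _ IH|g' _ IH|g' _ IH]; first by rewrite mul1mx.
- by rewrite -mulmxA sb1.
- by rewrite -mulmxA sb2.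
- by rewrite -mulmxA sb3.
Qed.

Definition tadd (K : fieldType) (t u : K * K * K) : K * K * K :=
  (t.1.1 + u.1.1, t.1.2 + u.1.2, t.2 + u.2).
Definition topp (K : fieldType) (t : K * K * K) : K * K * K :=
  (- t.1.1, - t.1.2, - t.2).
Definition tsc (K : fieldType) (c : K) (t : K * K * K) : K * K * K :=
  (c * t.1.1, c * t.1.2, c * t.2).
Definition ts1 (K : fieldType) (al be : K) (t : K * K * K) : K * K * K :=
  (- t.1.1, t.1.2 + al * t.1.1, t.2 + be * t.1.1).
Definition ts2 (K : fieldType) (l : K) (t : K * K * K) : K * K * K :=
  (t.1.1 + t.1.2, - t.1.2, t.2 + l * t.1.2).
Definition ts3 (K : fieldType) (m : K) (t : K * K * K) : K * K * K :=
  (t.1.1 + t.2, t.1.2 + m * t.2, - t.2).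

Definition PP (K : fieldType) (al be l m : K) (t : K * K * K) : Prop :=
  Cn (l * m) l m t.1.1 t.1.2 t.2 = 0 /\
  inG al be l m (Em (l * m) l m t.1.1 t.1.2 t.2).

Lemma PP_add (K : fieldType) (al be l m : K) t u :
  PP al be l m t -> PP al be l m u -> PP al be l m (tadd t u).
Proof.
move=> [ct gt] [cu gu]; split.
  by move: ct cu; rewrite /Cn /= => ct cu; rewrite -[0]addr0 -{1}ct -cu; ring.
by rewrite /tadd /= -Em_mul //; apply: inG_mul.
Qed.

Lemma PP_opp (K : fieldType) (al be l m : K) t :
  PP al be l m t -> PP al be l m (topp t).
Proof.
move=> [ct gt].
have co : Cn (l * m) l m (- t.1.1) (- t.1.2) (- t.2) = 0.
  by move: ct; rewrite /Cn => ct; rewrite -oppr0 -ct; ring.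
split => //.
have [h [hh e]] := inG_inv gt.
have e2 : Em (l * m) l m (- t.1.1) (- t.1.2) (- t.2) *m Em (l * m) l m t.1.1 t.1.2 t.2 = 1%:M.
  rewrite Em_mul // !addNr /Em.
  have -> : row3 (0 : K) 0 0 = 0 by rewrite /row3; apply/matrixP => [[[|[|[|?]]] ?] [[|[|[|?]]] ?]] //; rewrite !mxE.
  by rewrite mulmx0 addr0.
have -> : Em (l * m) l m (- t.1.1) (- t.1.2) (- t.2) = h.
  by rewrite -[LHS]mulmx1 -e mulmxA e2 mul1mx.
exact: hh.
Qed.

Lemma PP_s1 (K : fieldType) (al be l m : K) t :
  Delta al be (l * m) l m = 0 -> PP al be l m t -> PP al be l m (ts1 al be t).
Proof.
move=> hD [ct gt]; split.
  have -> : Cn (l * m) l m (ts1 al be t).1.1 (ts1 al be t).1.2 (ts1 al be t).2 =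
     Cn (l * m) l m t.1.1 t.1.2 t.2 - t.1.1 * Delta al be (l * m) l m.
    by rewrite /Cn /Delta /=; ring.
  by rewrite ct hD; ring.
have -> : Em (l * m) l m (ts1 al be t).1.1 (ts1 al be t).1.2 (ts1 al be t).2 =
   Rs1 al be *m Em (l * m) l m t.1.1 t.1.2 t.2 *m Rs1 al be.
  by symmetry; apply: conj_gen; [exact: sq1 | exact: sb1 | exact: r1].
by apply: inG_mul; [apply: inG_R1 | apply: inG_mul => //; apply: inG_R1].
Qed.

Lemma PP_s2 (K : fieldType) (al be l m : K) t :
  PP al be l m t -> PP al be l m (ts2 l t).
Proof.
move=> [ct gt]; split.
  have -> : Cn (l * m) l m (ts2 l t).1.1 (ts2 l t).1.2 (ts2 l t).2 =
     Cn (l * m) l m t.1.1 t.1.2 t.2 by rewrite /Cn /=; ring.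
  by [].
have -> : Em (l * m) l m (ts2 l t).1.1 (ts2 l t).1.2 (ts2 l t).2 =
   Rs2 l *m Em (l * m) l m t.1.1 t.1.2 t.2 *m Rs2 l.
  by symmetry; apply: conj_gen; [exact: sq2 | exact: sb2 | exact: r2].
by apply: inG_mul; [apply: inG_R2 | apply: inG_mul => //; apply: inG_R2].
Qed.

Lemma PP_s3 (K : fieldType) (al be l m : K) t :
  PP al be l m t -> PP al be l m (ts3 m t).
Proof.
move=> [ct gt]; split.
  have -> : Cn (l * m) l m (ts3 m t).1.1 (ts3 m t).1.2 (ts3 m t).2 =
     Cn (l * m) l m t.1.1 t.1.2 t.2 by rewrite /Cn /=; ring.
  by [].
have -> : Em (l * m) l m (ts3 m t).1.1 (ts3 m t).1.2 (ts3 m t).2 =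
   Rs3 m *m Em (l * m) l m t.1.1 t.1.2 t.2 *m Rs3 m.
  by symmetry; apply: conj_gen; [exact: sq3 | exact: sb3 | exact: r3].
by apply: inG_mul; [apply: inG_R3 | apply: inG_mul => //; apply: inG_R3].
Qed.

Definition T1 (K : fieldType) (al be : K) t := tadd (ts1 al be t) (topp t).
Definition T2 (K : fieldType) (l : K) t := tadd (ts2 l t) (topp t).
Definition T3 (K : fieldType) (m : K) t := tadd (ts3 m t) (topp t).

Lemma PP_T1 (K : fieldType) (al be l m : K) t :
  Delta al be (l * m) l m = 0 -> PP al be l m t -> PP al be l m (T1 al be t).
Proof. by move=> hD h; apply: PP_add; [apply: PP_s1 | apply: PP_opp]. Qed.
Lemma PP_T2 (K : fieldType) (al be l m : K) t :
  PP al be l m t -> PP al be l m (T2 l t).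
Proof. by move=> h; apply: PP_add; [apply: PP_s2 | apply: PP_opp]. Qed.
Lemma PP_T3 (K : fieldType) (al be l m : K) t :
  PP al be l m t -> PP al be l m (T3 m t).
Proof. by move=> h; apply: PP_add; [apply: PP_s3 | apply: PP_opp]. Qed.

Lemma PP_nat (K : fieldType) (al be l m : K) t n :
  PP al be l m t -> PP al be l m (tsc (n.+1)%:R t).
Proof.
move=> h; elim: n => [|n IH].
  by case: t h => [[x y] z] h; rewrite /tsc /= !mul1r.
have -> : tsc (n.+2)%:R t = tadd t (tsc (n.+1)%:R t).
  by case: t {h IH} => [[x y] z]; rewrite /tsc /tadd /=; congr (_, _, _); rewrite mulrS mulrDl mul1r.
exact: PP_add.
Qed.



Lemma PP_eq (K : fieldType) (al be l m : K) t u : PP al be l m t -> t = u -> PP al be l m u.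
Proof. by move=> h <-. Qed.

Lemma Q1 (K : fieldType) (al be l m x y z : K) : Delta al be (l * m) l m = 0 ->
  PP al be l m (x, y, z) -> PP al be l m (- (x + x), al * x, be * x).
Proof.
move=> hD h; apply: PP_eq (PP_T1 hD h) _.
by rewrite /T1 /tadd /topp /ts1; cbn [fst snd]; congr (_, _, _); ring.
Qed.
Lemma Q2 (K : fieldType) (al be l m x y z : K) :
  PP al be l m (x, y, z) -> PP al be l m (y, - (y + y), l * y).
Proof.
move=> h; apply: PP_eq (PP_T2 h) _.
by rewrite /T2 /tadd /topp /ts2; cbn [fst snd]; congr (_, _, _); ring.
Qed.
Lemma Q3 (K : fieldType) (al be l m x y z : K) :
  PP al be l m (x, y, z) -> PP al be l m (z, m * z, - (z + z)).
Proof.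
move=> h; apply: PP_eq (PP_T3 h) _.
by rewrite /T3 /tadd /topp /ts3; cbn [fst snd]; congr (_, _, _); ring.
Qed.
Lemma Qa (K : fieldType) (al be l m x y z x' y' z' : K) :
  PP al be l m (x, y, z) -> PP al be l m (x', y', z') -> PP al be l m (x + x', y + y', z + z').
Proof. exact: PP_add. Qed.
Lemma Qo (K : fieldType) (al be l m x y z : K) :
  PP al be l m (x, y, z) -> PP al be l m (- x, - y, - z).
Proof. exact: PP_opp. Qed.
Lemma Qn (K : fieldType) (al be l m x y z : K) n :
  PP al be l m (x, y, z) -> PP al be l m (n.+1%:R * x, n.+1%:R * y, n.+1%:R * z).
Proof. exact: PP_nat. Qed.

Lemma id_a (K : fieldType) (al be l m x y z : K) :
  Delta al be (l * m) l m = 0 -> 4 - l * m != 0 ->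
  PP al be l m (x, y, z) -> PP al be l m (al * x, al * y, al * z).
Proof.
move=> hD hg h.
have hC := h.1; rewrite /Cn in hC; cbn [fst snd] in hC.
have a1 := Q1 hD h. have a2 := Q2 h. have a12 := Q1 hD a2. have a21 := Q2 a1.
have := Qa (Qn 3 h) (Qa (Qn 1 a1) (Qa (Qn 1 a2) (Qa a12 a21))).
move=> hf; apply: PP_eq hf _.
have hx : x = - (y * (l + 2) + z * (m + 2)) / (4 - l * m).
  apply: (mulIf hg); rewrite mulfVK //.
  by apply: (lin0 (c := 1) _ hC); ring.
subst x; clear hC h a1 a2 a12 a21.
have [hl|hl] := eqVneq (l + 2) 0.
  have el : l = -2 by apply/eqP; rewrite -subr_eq0 opprK hl.
  subst l.
  have hm : m + 2 != 0.
    apply: contraNneq hg => hm; have -> : m = -2 by apply/eqP; rewrite -subr_eq0 opprK hm.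
    apply/eqP; ring.
  have eb : be = 4.
    have : (m + 2) * (4 - be) = 0 by rewrite -hD /Delta; ring.
    by move/eqP; rewrite mulf_eq0 (negPf hm) /= subr_eq0 => /eqP.
  subst be.
  congr (_, _, _); field; by rewrite ?hg ?hm.
have ea : al = (8 - 2 * be - 2 * (l * m) - be * m) / (l + 2).
  apply: (mulIf hl); rewrite mulfVK //.
  by apply: (lin0 (c := -1) _ hD); rewrite /Delta; ring.
subst al.
congr (_, _, _); field; by rewrite ?hg ?hl.
Qed.

Lemma id_b (K : fieldType) (al be l m x y z : K) :
  Delta al be (l * m) l m = 0 -> 4 - l * m != 0 ->
  PP al be l m (x, y, z) -> PP al be l m (be * x, be * y, be * z).
Proof.
move=> hD hg h.
have hC := h.1; rewrite /Cn in hC; cbn [fst snd] in hC.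
have a1 := Q1 hD h. have a3 := Q3 h. have a13 := Q1 hD a3. have a31 := Q3 a1.
have := Qa (Qn 3 h) (Qa (Qn 1 a1) (Qa (Qn 1 a3) (Qa a13 a31))).
move=> hf; apply: PP_eq hf _.
have hx : x = - (y * (l + 2) + z * (m + 2)) / (4 - l * m).
  apply: (mulIf hg); rewrite mulfVK //.
  by apply: (lin0 (c := 1) _ hC); ring.
subst x; clear hC h a1 a3 a13 a31.
have [hl|hl] := eqVneq (l + 2) 0.
  have el : l = -2 by apply/eqP; rewrite -subr_eq0 opprK hl.
  subst l.
  have hm : m + 2 != 0.
    apply: contraNneq hg => hm; have -> : m = -2 by apply/eqP; rewrite -subr_eq0 opprK hm.
    apply/eqP; ring.
  have eb : be = 4.
    have : (m + 2) * (4 - be) = 0 by rewrite -hD /Delta; ring.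
    by move/eqP; rewrite mulf_eq0 (negPf hm) /= subr_eq0 => /eqP.
  subst be.
  congr (_, _, _); field; by rewrite ?hg ?hm.
have ea : al = (8 - 2 * be - 2 * (l * m) - be * m) / (l + 2).
  apply: (mulIf hl); rewrite mulfVK //.
  by apply: (lin0 (c := -1) _ hD); rewrite /Delta; ring.
subst al.
congr (_, _, _); field; by rewrite ?hg ?hl.
Qed.

Lemma id_g (K : fieldType) (al be l m x y z : K) :
  Delta al be (l * m) l m = 0 -> 4 - l * m != 0 ->
  PP al be l m (x, y, z) -> PP al be l m (l * m * x, l * m * y, l * m * z).
Proof.
move=> hD hg h.
have hC := h.1; rewrite /Cn in hC; cbn [fst snd] in hC.
have a2 := Q2 h. have a3 := Q3 h. have a23 := Q2 a3. have a32 := Q3 a2.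
have := Qa (Qn 3 h) (Qa (Qn 1 a2) (Qa (Qn 1 a3) (Qa a23 a32))).
move=> hf; apply: PP_eq hf _.
have hx : x = - (y * (l + 2) + z * (m + 2)) / (4 - l * m).
  apply: (mulIf hg); rewrite mulfVK //.
  by apply: (lin0 (c := 1) _ hC); ring.
subst x; clear hC h a2 a3 a23 a32.
have [hl|hl] := eqVneq (l + 2) 0.
  have el : l = -2 by apply/eqP; rewrite -subr_eq0 opprK hl.
  subst l.
  have hm : m + 2 != 0.
    apply: contraNneq hg => hm; have -> : m = -2 by apply/eqP; rewrite -subr_eq0 opprK hm.
    apply/eqP; ring.
  have eb : be = 4.
    have : (m + 2) * (4 - be) = 0 by rewrite -hD /Delta; ring.
    by move/eqP; rewrite mulf_eq0 (negPf hm) /= subr_eq0 => /eqP.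
  subst be.
  congr (_, _, _); field; by rewrite ?hg ?hm.
have ea : al = (8 - 2 * be - 2 * (l * m) - be * m) / (l + 2).
  apply: (mulIf hl); rewrite mulfVK //.
  by apply: (lin0 (c := -1) _ hD); rewrite /Delta; ring.
subst al.
congr (_, _, _); field; by rewrite ?hg ?hl.
Qed.

Lemma id_al (K : fieldType) (al be l m x y z : K) :
  Delta al be (l * m) l m = 0 -> 4 - l * m != 0 ->
  PP al be l m (x, y, z) -> PP al be l m (al * l * x, al * l * y, al * l * z).
Proof.
move=> hD hg h.
have hC := h.1; rewrite /Cn in hC; cbn [fst snd] in hC.
have a1 := Q1 hD h. have a2 := Q2 h. have a3 := Q3 h. have a21 := Q2 a1. have a23 := Q2 a3. have a31 := Q3 a1.
have a132 := Q1 hD (Q3 a2). have a231 := Q2 (Q3 a1).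
have := Qo (Qa (Qn 7 h) (Qa (Qn 3 a1) (Qa (Qn 3 a2) (Qa (Qn 3 a3) (Qa (Qn 1 a21) (Qa (Qn 1 a23) (Qa (Qn 1 a31) (Qa (Qo a132) a231)))))))).
move=> hf; apply: PP_eq hf _.
have hx : x = - (y * (l + 2) + z * (m + 2)) / (4 - l * m).
  apply: (mulIf hg); rewrite mulfVK //.
  by apply: (lin0 (c := 1) _ hC); ring.
subst x; clear hC h a1 a2 a3 a21 a23 a31 a132 a231.
have [hl|hl] := eqVneq (l + 2) 0.
  have el : l = -2 by apply/eqP; rewrite -subr_eq0 opprK hl.
  subst l.
  have hm : m + 2 != 0.
    apply: contraNneq hg => hm; have -> : m = -2 by apply/eqP; rewrite -subr_eq0 opprK hm.
    apply/eqP; ring.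
  have eb : be = 4.
    have : (m + 2) * (4 - be) = 0 by rewrite -hD /Delta; ring.
    by move/eqP; rewrite mulf_eq0 (negPf hm) /= subr_eq0 => /eqP.
  subst be.
  congr (_, _, _); field; by rewrite ?hg ?hm.
have ea : al = (8 - 2 * be - 2 * (l * m) - be * m) / (l + 2).
  apply: (mulIf hl); rewrite mulfVK //.
  by apply: (lin0 (c := -1) _ hD); rewrite /Delta; ring.
subst al.
congr (_, _, _); field; by rewrite ?hg ?hl.
Qed.


Lemma ga_ne4 (K : fieldType) r (w : K) : (3 <= r)%N -> r.-primitive_root w ->
  4 - (2 + w + w^-1) != 0.
Proof.
move=> hr hw.
have w0 : w != 0.
  apply/eqP => w0; have := prim_expr_order hw.
  have r0 : (r == 0)%N = false by case: r hr hw.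
  by rewrite w0 expr0n r0 => /eqP; rewrite eq_sym oner_eq0.
apply/negP => /eqP h.
have h2 : (w - 1) ^+ 2 = 0.
  have -> : (w - 1) ^+ 2 = - w * (4 - (2 + w + w^-1)) by field.
  by rewrite h mulr0.
move/eqP: h2; rewrite expf_eq0 /= subr_eq0 => /eqP w1.
have := prim_order_dvd hw 1; rewrite w1 expr1 eqxx => hd.
have hr1 : r = 1%N by apply/eqP; rewrite -dvdn1 hd.
by move: hr; rewrite hr1.
Qed.

Lemma a1dec (K : fieldType) (ga l m : K) : 4 - ga != 0 ->
  avec K i1 = (4 - ga)^-1 *: (bvec ga l m - (l + 2) *: avec K i2 - (m + 2) *: avec K i3).
Proof. move=> h; mxbrute; by field. Qed.

Lemma a1vec (K : fieldType) (ga l m y z : K) : 4 - ga != 0 ->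
  (4 - ga)^-1 *: (bvec ga l m - (l + 2) *: (avec K i2 + y *: bvec ga l m)
     - (m + 2) *: (avec K i3 + z *: bvec ga l m)) =
  avec K i1 + (- (y * (l + 2) + z * (m + 2)) / (4 - ga)) *: bvec ga l m.
Proof. move=> h; mxbrute; by field. Qed.

Lemma ord3 (j : 'I_3) : j = i1 \/ j = i2 \/ j = i3.
Proof.
case: j => [[|[|[|k]]] hk] //.
- by left; apply: val_inj.
- by right; left; apply: val_inj.
- by right; right; apply: val_inj.
Qed.

Lemma mx_cols (K : fieldType) (A B : 'M[K]_3) :
  A *m avec K i1 = B *m avec K i1 -> A *m avec K i2 = B *m avec K i2 ->
  A *m avec K i3 = B *m avec K i3 -> A = B.
Proof.
move=> h1 h2 h3; apply/matrixP => i j.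
have : A *m avec K j = B *m avec K j.
  by case: (ord3 j) => [->|[->|->]].
by rewrite /avec -!colE => /(congr1 (fun v : 'cV[K]_3 => v i 0)); rewrite !mxE.
Qed.

Lemma recon (K : fieldType) (A : 'M[K]_3) (ga l m y z : K) : 4 - ga != 0 ->
  A *m bvec ga l m = bvec ga l m ->
  A *m avec K i2 = avec K i2 + y *: bvec ga l m ->
  A *m avec K i3 = avec K i3 + z *: bvec ga l m ->
  A = Em ga l m (- (y * (l + 2) + z * (m + 2)) / (4 - ga)) y z.
Proof.
move=> hg hb h2 h3; apply: mx_cols; last by rewrite Em_a3.
  rewrite Em_a1 (a1dec l m hg) -scalemxAr !mulmxBr -!scalemxAr hb h2 h3.
  mxbrute; by field.
by rewrite Em_a2.
Qed.

Lemma Sring (K : fieldType) (al be l m x : K) :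
  Delta al be (l * m) l m = 0 -> 4 - l * m != 0 ->
  inO' al be (l * m) l m x ->
  forall x0 y0 z0, PP al be l m (x0, y0, z0) -> PP al be l m (x * x0, x * y0, x * z0).
Proof.
move=> hD hg; elim => {x}.
- by move=> x0 y0 z0 h; rewrite !mul1r.
- by move=> x0 y0 z0 h; apply: id_a.
- by move=> x0 y0 z0 h; apply: id_b.
- by move=> x0 y0 z0 h; apply: id_g.
- by move=> x0 y0 z0 h; apply: id_al.
- move=> x0 y0 z0 h.
  apply: PP_eq (Qa (Qn 7 h) (Qo (Qa (Qn 1 (id_a hD hg h)) (Qa (Qn 1 (id_b hD hg h))
     (Qa (Qn 1 (id_g hD hg h)) (id_al hD hg h)))))) _.
  congr (_, _, _).
  + by apply: (lin0 (c := x0) _ hD); rewrite /Delta; ring.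
  + by apply: (lin0 (c := y0) _ hD); rewrite /Delta; ring.
  + by apply: (lin0 (c := z0) _ hD); rewrite /Delta; ring.
- move=> x y _ hx _ hy x0 y0 z0 h.
  by apply: PP_eq (Qa (hx _ _ _ h) (hy _ _ _ h)) _; congr (_, _, _); ring.
- move=> x _ hx x0 y0 z0 h.
  by apply: PP_eq (Qo (hx _ _ _ h)) _; congr (_, _, _); ring.
- move=> x y _ hx _ hy x0 y0 z0 h.
  by apply: PP_eq (hx _ _ _ (hy _ _ _ h)) _; congr (_, _, _); ring.
Qed.

Lemma inO'_nat (K : fieldType) (al be ga l m : K) n : inO' al be ga l m n%:R.
Proof.
elim: n => [|n IH]; first by rewrite mulr0n -(subrr (1 : K)); apply: O'add; [apply: O'1 | apply: O'opp; apply: O'1].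
by rewrite mulrS; apply: O'add => //; apply: O'1.
Qed.

Theorem theorem1 (K : numClosedFieldType) (p q r : nat)
  (hp : (3 <= p)%N) (hq : (3 <= q)%N) (hr : (3 <= r)%N)
  (w1 w2 w3 : K)
  (hw1 : p.-primitive_root w1) (hw2 : q.-primitive_root w2)
  (hw3 : r.-primitive_root w3)
  (alpha beta gamma l m : K)
  (halpha : alpha = 2 + w1 + w1^-1) (hbeta : beta = 2 + w2 + w2^-1)
  (hgamma : gamma = 2 + w3 + w3^-1)
  (hlm : l * m = gamma)
  (hDelta : Delta alpha beta gamma l m = 0) :
  (forall (z : K * K) (x : K),
      N2 alpha beta gamma l m z -> inO' alpha beta gamma l m x ->
      N2 alpha beta gamma l m (x * z.1, x * z.2)) /\
  (forall z : K * K,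
      N2 alpha beta gamma l m z ->
      N2 alpha beta gamma l m ((-4 + alpha + beta + gamma + alpha * l) * z.1,
                               (-4 + alpha + beta + gamma + alpha * l) * z.2)).
Proof.
have hg4 : 4 - gamma != 0 by rewrite hgamma; exact: ga_ne4 hr hw3.
have part1 : forall (z : K * K) (x : K),
      N2 alpha beta gamma l m z -> inO' alpha beta gamma l m x ->
      N2 alpha beta gamma l m (x * z.1, x * z.2).
  clear hgamma; subst gamma.
  move=> [z1 z2] x [g [[hgG _] [hc2 hc3]]] hx /=.
  rewrite /= in hc2 hc3.
  have gb := bfix hDelta hgG.
  have eg := recon hg4 gb hc2 hc3.
  set w := - (z1 * (l + 2) + z2 * (m + 2)) / (4 - l * m) in eg.
  have hP : PP alpha beta l m (w, z1, z2).
    split; last by rewrite -eg.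
    by rewrite /Cn /w /=; field.
  have hP' := Sring hDelta hg4 hx hP.
  exists (Em (l * m) l m (x * w) (x * z1) (x * z2)).
  split; last by split; rewrite /= ?Em_a2 ?Em_a3.
  split; first exact: hP'.2.
  move=> v h hh.
  rewrite /Em mulmxDl mul1mx [v + _]addrC addrK !mulmxA (bfix hDelta hh).
  by [].
split; first exact: part1.
move=> z hz; apply: part1 => //.
apply: O'add; last by apply: O'al.
apply: O'add; last by apply: O'gamma.
apply: O'add; last by apply: O'beta.
apply: O'add; last by apply: O'alpha.
by apply: O'opp; apply: inO'_nat.
Qed.
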